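(* Consider $n$ agents in the plane evolving according to the piecewise continuous-time dynamics described in the context, with blind-zone radius $\delta>0$. Let $i\neq j$ be two agents and let $t$ be a time with $d_{ij}(t)=\|p_i(t)-p_j(t)\|>\delta$ (the agents are ''separated''). Then the distance between them does not increase at $t$: $\frac{d}{dt}d_{ij}(t)\le 0$.
   Context: Agents $1,\dots,n$ have positions $p_i(t)\in\mathbb{R}^2$. Fix $\delta>0$. For each integer $k\ge 0$ and each agent $i$, let $\chi^{(i)}_k$ be independent random variables, uniformly distributed on $[0,2\pi)$, and set the heading $\theta_i(t)=\chi^{(i)}_k$ for $t\in[k,k+1)$, with unit heading vector $\hat\theta_i(t)=(\cos\theta_i(t),\sin\theta_i(t))^\top$. The motion law is $\dot p_i(t)=\hat\theta_i(t)\,s_i(t)$, where $s_i(t)=0$ if there exists an agent $j$ with $d_{ij}(t)>\delta$ and $\hat\theta_i(t)^\top\big(p_j(t)-p_i(t)\big)\le 0$, and $s_i(t)=1$ otherwise. Here $d_{ij}(t)=\|p_i(t)-p_j(t)\|$. (That is, each agent moves forward with unit speed when its closed back half-plane, excluding a blind-zone half-disc of radius $\delta$, contains no other agent, and otherwise stays put.) The initial configuration $p_1(0),\dots,p_n(0)$ is arbitrary. *)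

(* Defs.v *)
From Stdlib Require Import Reals Lra ClassicalEpsilon.
From Coquelicot Require Import Coquelicot.
Open Scope R_scope.

Definition pt := (R * R)%type.

Definition edist (a b : pt) : R :=
  sqrt ((fst a - fst b) ^ 2 + (snd a - snd b) ^ 2).

(* Heading of agent i at time t >= 0: theta_i(t) = chi i k for t in [k, k+1).
   [chi i k] is one realization of the random variables chi^(i)_k. *)
Definition heading (chi : nat -> nat -> R) (i : nat) (t : R) : R :=
  chi i (Z.to_nat (Int_part t)).

Definition heading_dot (chi : nat -> nat -> R) (i : nat) (t : R) (pi q : pt) : R :=
  cos (heading chi i t) * (fst q - fst pi) + sin (heading chi i t) * (snd q - snd pi).

Definition blocked (n : nat) (delta : R) (chi : nat -> nat -> R)
    (p : nat -> R -> pt) (i : nat) (t : R) : Prop :=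
  exists j, (j < n)%nat /\ edist (p i t) (p j t) > delta /\
            heading_dot chi i t (p i t) (p j t) <= 0.

Definition speed (n : nat) (delta : R) (chi : nat -> nat -> R)
    (p : nat -> R -> pt) (i : nat) (t : R) : R :=
  if excluded_middle_informative (blocked n delta chi p i t) then 0 else 1.

Definition has_rderiv (f : R -> R) (t l : R) : Prop :=
  filterlim (fun h => (f (t + h) - f t) / h) (at_right 0) (locally l).

(* The motion law dp_k/dt = hat(theta_k)(t) s_k(t), understood with right
   derivatives (headings are constant on [k, k+1)), at time tau. *)
Definition motion_law (n : nat) (delta : R) (chi : nat -> nat -> R)
    (p : nat -> R -> pt) (k : nat) (tau : R) : Prop :=
  has_rderiv (fun u => fst (p k u)) tau
     (cos (heading chi k tau) * speed n delta chi p k tau) /\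
  has_rderiv (fun u => snd (p k u)) tau
     (sin (heading chi k tau) * speed n delta chi p k tau).

(* Main.v *)
Require Import Defs.
From Stdlib Require Import Reals Lra ClassicalEpsilon.
From Coquelicot Require Import Coquelicot.
Open Scope R_scope.

Section L.
Context {T : Type} {F : (T -> Prop) -> Prop} {FF : Filter F}.
Lemma lim_plus f g a b : filterlim f F (locally a) -> filterlim g F (locally b) ->
  filterlim (fun x => f x + g x) F (locally (a + b)).
Proof. intros Hf Hg. exact (filterlim_comp_2 f g Rplus Hf Hg (filterlim_plus a b)). Qed.
Lemma lim_mult f g a b : filterlim f F (locally a) -> filterlim g F (locally b) ->
  filterlim (fun x => f x * g x) F (locally (a * b)).
Proof. intros Hf Hg. exact (filterlim_comp_2 f g Rmult Hf Hg (filterlim_mult a b)). Qed.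
Lemma lim_opp f a : filterlim f F (locally a) -> filterlim (fun x => - f x) F (locally (- a)).
Proof. intros Hf. exact (filterlim_comp _ _ _ f Ropp _ _ _ Hf (filterlim_opp a)). Qed.
End L.

Lemma right_h : filterlim (fun h => h) (at_right 0) (locally 0).
Proof. apply (filterlim_filter_le_1 _ (filter_le_within _)). apply filterlim_id. Qed.

Lemma right_pos : at_right 0 (fun h => h <> 0).
Proof. exists (mkposreal 1 Rlt_0_1). intros y _ Hy. lra. Qed.

Lemma rderiv_cont f t l : has_rderiv f t l ->
  filterlim (fun h => f (t + h)) (at_right 0) (locally (f t)).
Proof.
  intros H. unfold has_rderiv in H.
  assert (K := lim_plus _ _ _ _ (filterlim_const (F:=at_right 0) (f t))
     (lim_mult _ _ _ _ right_h H)).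
  rewrite Rmult_0_l, Rplus_0_r in K.
  eapply filterlim_ext_loc; [|exact K].
  eapply filter_imp; [|exact right_pos]. intros h Hh. simpl. field. auto.
Qed.

Lemma rderiv_minus f g t a b : has_rderiv f t a -> has_rderiv g t b ->
  has_rderiv (fun u => f u - g u) t (a - b).
Proof.
  intros Ha Hb. unfold has_rderiv in *.
  eapply filterlim_ext_loc; [|exact (lim_plus _ _ _ _ Ha (lim_opp _ _ Hb))].
  eapply filter_imp; [|exact right_pos]. intros h Hh. simpl. field. auto.
Qed.

Lemma rderiv_plus f g t a b : has_rderiv f t a -> has_rderiv g t b ->
  has_rderiv (fun u => f u + g u) t (a + b).
Proof.
  intros Ha Hb. unfold has_rderiv in *.
  eapply filterlim_ext_loc; [|exact (lim_plus _ _ _ _ Ha Hb)].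
  eapply filter_imp; [|exact right_pos]. intros h Hh. simpl. field. auto.
Qed.

Lemma rderiv_sq f t a : has_rderiv f t a ->
  has_rderiv (fun u => f u ^ 2) t (2 * f t * a).
Proof.
  intros Ha. pose proof (rderiv_cont _ _ _ Ha) as C.
  assert (K := lim_mult _ _ _ _ (lim_plus _ _ _ _ C (filterlim_const (F:=at_right 0) (f t))) Ha).
  unfold has_rderiv in *.
  replace (2 * f t * a) with ((f t + f t) * a) by ring.
  eapply filterlim_ext_loc; [|exact K].
  eapply filter_imp; [|exact right_pos]. intros h Hh. simpl. field. auto.
Qed.

Lemma rderiv_sqrt f t a : has_rderiv f t a -> (forall u, 0 <= f u) -> 0 < f t ->
  has_rderiv (fun u => sqrt (f u)) t (/ (2 * sqrt (f t)) * a).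
Proof.
  intros Ha Hpos Ht. pose proof (rderiv_cont _ _ _ Ha) as C.
  assert (St : 0 < sqrt (f t)) by (apply sqrt_lt_R0; auto).
  assert (Q : filterlim (fun h => / (sqrt (f (t + h)) + sqrt (f t))) (at_right 0)
             (locally (/ (2 * sqrt (f t))))).
  { replace (2 * sqrt (f t)) with (sqrt (f t) + sqrt (f t)) by ring.
    apply (filterlim_comp _ _ _ (fun h => f (t+h)) (fun z => / (sqrt z + sqrt (f t))) _ (locally (f t))); [exact C|].
    apply (continuous_Rinv_comp (fun z => sqrt z + sqrt (f t))).
    - apply (continuous_plus (U:=R_UniformSpace) (K:=R_AbsRing) (V:=R_NormedModule) (fun z => sqrt z) (fun _ => sqrt (f t))).
      + apply continuous_sqrt.
      + apply continuous_const.
    - simpl. lra. }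
  unfold has_rderiv in *.
  eapply filterlim_ext_loc; [|exact (lim_mult _ _ _ _ Q Ha)].
  eapply filter_imp; [|exact right_pos]. intros h Hh. simpl.
  assert (S1 : 0 <= sqrt (f (t + h))) by apply sqrt_pos.
  assert (E : f (t+h) - f t = (sqrt (f (t+h)) - sqrt (f t)) * (sqrt (f (t+h)) + sqrt (f t))).
  { ring_simplify. rewrite (pow2_sqrt (f (t+h))) by auto. rewrite (pow2_sqrt (f t)) by lra. ring. }
  rewrite E. field. split; auto. lra.
Qed.

Lemma speed_nonneg n delta chi p i j t : (j < n)%nat ->
  edist (p i t) (p j t) > delta ->
  0 <= speed n delta chi p i t * heading_dot chi i t (p i t) (p j t).
Proof.
  intros Hj Hd. unfold speed.
  destruct (excluded_middle_informative (blocked n delta chi p i t)) as [B|NB].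
  - lra.
  - destruct (Rle_lt_dec (heading_dot chi i t (p i t) (p j t)) 0) as [L|L].
    + exfalso. apply NB. exists j. auto.
    + lra.
Qed.

Theorem lemma1 (n : nat) (delta : R) (chi : nat -> nat -> R)
    (p : nat -> R -> pt) (i j : nat) (t : R) :
  0 < delta ->
  (forall k m, 0 <= chi k m < 2 * PI) ->
  (forall k tau, (k < n)%nat -> 0 <= tau -> motion_law n delta chi p k tau) ->
  (i < n)%nat -> (j < n)%nat -> i <> j ->
  0 <= t ->
  edist (p i t) (p j t) > delta ->
  exists l, has_rderiv (fun u => edist (p i u) (p j u)) t l /\ l <= 0.
Proof.
  intros Hdel _ Hm Hi Hj _ Ht Hd.
  destruct (Hm i t Hi Ht) as [Xi Yi].
  destruct (Hm j t Hj Ht) as [Xj Yj].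
  pose proof (speed_nonneg n delta chi p i j t Hj Hd) as Fi.
  assert (Hd' : edist (p j t) (p i t) > delta).
  { unfold edist in *. replace ((fst (p j t) - fst (p i t)) ^ 2 + (snd (p j t) - snd (p i t)) ^ 2)
     with ((fst (p i t) - fst (p j t)) ^ 2 + (snd (p i t) - snd (p j t)) ^ 2) by ring. exact Hd. }
  pose proof (speed_nonneg n delta chi p j i t Hi Hd') as Fj.
  set (g := fun u => (fst (p i u) - fst (p j u)) ^ 2 + (snd (p i u) - snd (p j u)) ^ 2).
  assert (Gpos : forall u, 0 <= g u).
  { intro u. unfold g. apply Rplus_le_le_0_compat; apply pow2_ge_0. }
  assert (Gt : 0 < g t).
  { destruct (Rle_lt_dec (g t) 0) as [L|L]; auto.
    unfold edist in Hd. fold (g t) in Hd. rewrite (sqrt_neg_0 _ L) in Hd. lra. }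
  pose proof (rderiv_plus _ _ _ _ _ (rderiv_sq _ _ _ (rderiv_minus _ _ _ _ _ Xi Xj))
                (rderiv_sq _ _ _ (rderiv_minus _ _ _ _ _ Yi Yj))) as DG.
  pose proof (rderiv_sqrt g t _ DG Gpos Gt) as DS.
  eexists. split; [exact DS|].
  assert (St : 0 < sqrt (g t)) by (apply sqrt_lt_R0; auto).
  assert (I : 0 < / (2 * sqrt (g t))) by (apply Rinv_0_lt_compat; lra).
  apply Rmult_le_0_l. lra.
  unfold heading_dot in Fi, Fj.
  set (si := speed n delta chi p i t) in *.
  set (sj := speed n delta chi p j t) in *.
  nra.
Qed.
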